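(* For any quasi-PL space $\mathcal{F}$, the underlying simplicial set $\mathcal{F}_\bullet$ is a Kan complex.
   Context: $\mathbf{PL}$ is the category of PL spaces and PL maps. A quasi-PL space is a functor $\mathcal{F}:\mathbf{PL}^{op}\to\mathbf{Sets}$ that is a sheaf for open covers and such that, for every PL space $P$ and every locally finite cover $\{Q_i\}$ of $P$ by closed PL subspaces, $\mathcal{F}(P)\to\prod_i\mathcal{F}(Q_i)\rightrightarrows\prod_{i,j}\mathcal{F}(Q_i\cap Q_j)$ is an equalizer. The underlying simplicial set $\mathcal{F}_\bullet$ is the composite of $\mathcal{F}$ with the functor $\Delta\to\mathbf{PL}$ sending $[p]$ to the geometric simplex $\Delta^p$ (the convex hull of the standard basis of $\mathbb{R}^{p+1}$) and an order-preserving map to the induced linear map. Thus $\mathcal{F}_p=\mathcal{F}(\Delta^p)$. *)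

(* Defs.v *)
From HB Require Import structures.
From mathcomp Require Import all_boot all_order all_algebra.
From mathcomp Require Import all_classical all_reals all_analysis.
From mathcomp Require Import Rstruct Rstruct_topology.
Set Implicit Arguments. Unset Strict Implicit. Unset Printing Implicit Defensive.
Import Order.TTheory GRing.Theory Num.Theory.
Local Open Scope classical_set_scope.
Local Open Scope ring_scope.

Definition R := Rdefinitions.R.
Definition vec (n : nat) := 'rV[R]_n.

Definition hull n k (v : 'I_k -> vec n) : set (vec n) :=
  [set x | exists t : 'I_k -> R,
     (forall i, 0 <= t i) /\ \sum_i t i = 1 /\ x = \sum_i t i *: v i].

Definition polytope n (C : set (vec n)) := exists k (v : 'I_k -> vec n), C = hull v.

Definition rel_nbhs n (P N : set (vec n)) (a : vec n) :=
  exists V : set (vec n), open V /\ V a /\ V `&` P `<=` N.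

Definition polyhedron n (P : set (vec n)) :=
  forall a, P a -> exists k (C : 'I_k -> set (vec n)),
    (forall j, polytope (C j)) /\ (forall j, C j `<=` P) /\
    rel_nbhs P [set x | exists j, C j x] a.

Definition affine_on n m (C : set (vec n)) (f : vec n -> vec m) :=
  forall x y (t : R), C x -> C y -> 0 <= t <= 1 ->
    f (t *: x + (1 - t) *: y) = t *: f x + (1 - t) *: f y.

Definition PL_map n m (P : set (vec n)) (Q : set (vec m)) (f : vec n -> vec m) :=
  (forall x, P x -> Q (f x)) /\
  forall a, P a -> exists k (C : 'I_k -> set (vec n)),
    (forall j, polytope (C j)) /\ (forall j, C j `<=` P) /\
    (forall j, affine_on (C j) f) /\ rel_nbhs P [set x | exists j, C j x] a.

Record PLspace := mkPL { dim : nat; carrier : set (vec dim); polyP : polyhedron carrier }.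
Arguments carrier : clear implicits.

Lemma incl_PL n (U P : set (vec n)) : polyhedron U -> U `<=` P -> PL_map U P id.
Proof.
move=> hU sUP; split => [x Ux|a Ua]; first exact: sUP.
have [k [C [hC [hCU hN]]]] := hU a Ua.
by exists k, C; split => //; split => //; split => // j x y t _ _ _.
Qed.

Definition is_equalizer (A : Type) (I : Type) (B : I -> Type) (C : I -> I -> Type)
  (r : forall i, A -> B i) (p1 : forall i j, B i -> C i j) (p2 : forall i j, B j -> C i j) :=
  (forall s t : A, (forall i, r i s = r i t) -> s = t) /\
  (forall b : forall i, B i, (forall i j, p1 i j (b i) = p2 i j (b j)) ->
     exists s : A, forall i, r i s = b i).

Unset Implicit Arguments.
Record quasiPL := {
  sec : PLspace -> Type;
  res : forall (P Q : PLspace) (f : vec (dim P) -> vec (dim Q)),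
          PL_map (carrier P) (carrier Q) f -> sec Q -> sec P;
  res_ext : forall P Q f g hf hg s, (forall x, carrier P x -> f x = g x) ->
          res P Q f hf s = res P Q g hg s;
  res_id : forall P h s, res P P id h s = s;
  res_comp : forall (P Q S : PLspace) f g hf hg hgf s,
          res P S (g \o f) hgf s = res P Q f hf (res Q S g hg s);
  open_sheaf : forall (P : PLspace) (I : Type) (U : I -> set (vec (dim P)))
      (hU : forall i, polyhedron (U i)) (hUU : forall i j, polyhedron (U i `&` U j))
      (sUP : forall i, U i `<=` carrier P),
      (forall i, exists V, open V /\ U i = V `&` carrier P) ->
      (forall x, carrier P x -> exists i, U i x) ->
      is_equalizer
        (fun i => res (mkPL (hU i)) P id (incl_PL (hU i) (sUP i)))
        (fun i j => res (mkPL (hUU i j)) (mkPL (hU i)) id (incl_PL (hUU i j) (@subIsetl _ _ _)))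
        (fun i j => res (mkPL (hUU i j)) (mkPL (hU j)) id (incl_PL (hUU i j) (@subIsetr _ _ _)));
  closed_sheaf : forall (P : PLspace) (I : Type) (Q : I -> set (vec (dim P)))
      (hQ : forall i, polyhedron (Q i)) (hQQ : forall i j, polyhedron (Q i `&` Q j))
      (sQP : forall i, Q i `<=` carrier P),
      (forall i, exists V, closed V /\ Q i = V `&` carrier P) ->
      (forall x, carrier P x -> exists i, Q i x) ->
      (forall x, carrier P x -> exists V, open V /\ V x /\
                   finite_set [set i | exists y, V y /\ Q i y]) ->
      is_equalizer
        (fun i => res (mkPL (hQ i)) P id (incl_PL (hQ i) (sQP i)))
        (fun i j => res (mkPL (hQQ i j)) (mkPL (hQ i)) id (incl_PL (hQQ i j) (@subIsetl _ _ _)))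
        (fun i j => res (mkPL (hQQ i j)) (mkPL (hQ j)) id (incl_PL (hQQ i j) (@subIsetr _ _ _)))
}.

Set Implicit Arguments.

Definition std_basis p : 'I_p.+1 -> vec p.+1 := fun i => delta_mx 0 i.

Definition Delta p : set (vec p.+1) := hull (@std_basis p).
Arguments Delta : clear implicits.

Lemma Delta_poly p : polyhedron (Delta p).
Proof.
move=> a Da; exists 1%N, (fun=> Delta p); split; first by move=> j; exists p.+1, (@std_basis p).
split; first by move=> j x.
exists setT; split; first exact: openT.
by split=> // x [_ Dx]; exists ord0.
Qed.

Definition DeltaPL p : PLspace := @mkPL p.+1 (Delta p) (@Delta_poly p).

Definition ind_mx p q (th : 'I_p.+1 -> 'I_q.+1) : 'M[R]_(p.+1, q.+1) :=
  \matrix_(i, j) ((th i == j)%:R).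
Definition ind p q (th : 'I_p.+1 -> 'I_q.+1) : vec p.+1 -> vec q.+1 :=
  fun x => x *m ind_mx th.

Lemma ind_PL p q (th : 'I_p.+1 -> 'I_q.+1) : PL_map (Delta p) (Delta q) (ind th).
Proof.
have ind_lin : forall (a b : R) x y, ind th (a *: x + b *: y) = a *: ind th x + b *: ind th y.
  by move=> a b x y; rewrite /ind mulmxDl !scalemxAl.
split=> [x [t [t0 [t1 ->]]]|a Da].
  exists (fun j => \sum_(i | th i == j) t i); split; first by move=> j; apply: sumr_ge0.
  split.
    by rewrite -t1 (partition_big th xpredT) //=.
  rewrite /ind mulmx_suml (partition_big th xpredT) //=.
  apply: eq_bigr => j _; rewrite scaler_suml; apply: eq_bigr => i /eqP <-.
  rewrite -scalemxAl /std_basis -rowE; congr (_ *: _).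
  by apply/matrixP => r l; rewrite !mxE (ord1 r) eqxx /= eq_sym.
exists 1%N, (fun=> Delta p); split; first by move=> j; exists p.+1, (@std_basis p).
split; first by move=> j x.
split; first by move=> j x y t _ _ _; exact: ind_lin.
exists setT; split; first exact: openT.
by split=> // x [_ Dx]; exists ord0.
Qed.

Record sset := { ss_obj : nat -> Type;
                 ss_op : forall p q, ('I_p.+1 -> 'I_q.+1) -> ss_obj q -> ss_obj p }.

Definition underlying (F : quasiPL) : sset :=
  {| ss_obj := fun p => sec F (DeltaPL p);
     ss_op := fun p q th => res F (DeltaPL p) (DeltaPL q) (ind th) (ind_PL th) |}.

Definition face (X : sset) n (i : 'I_n.+2) : ss_obj X n.+1 -> ss_obj X n :=
  @ss_op X n n.+1 (lift i).

Definition horn_compat (X : sset) (n : nat) :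
    ('I_n.+2 -> ss_obj X n) -> 'I_n.+2 -> Prop :=
  match n as n0 return ('I_n0.+2 -> ss_obj X n0) -> 'I_n0.+2 -> Prop with
  | 0 => fun _ _ => True
  | m.+1 => fun y k => forall i j : 'I_m.+3, (i < j)%N -> i != k -> j != k ->
              face (inord i) (y j) = face (inord j.-1) (y i)
  end.

Definition is_Kan (X : sset) : Prop :=
  forall (n : nat) (k : 'I_n.+2) (y : 'I_n.+2 -> ss_obj X n),
    horn_compat y k -> exists x : ss_obj X n.+1, forall i, i != k -> face i x = y i.

(* Main.v *)
Require Import Defs.
From HB Require Import structures.
From mathcomp Require Import all_boot all_order all_algebra.
From mathcomp Require Import all_classical all_reals all_analysis.
From mathcomp Require Import Rstruct Rstruct_topology.
From mathcomp Require Import ring lra zify.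
Set Implicit Arguments. Unset Strict Implicit. Unset Printing Implicit Defensive.
Import Order.TTheory GRing.Theory Num.Theory.
Local Open Scope classical_set_scope.
Local Open Scope ring_scope.

Lemma sum_coord p k (t : 'I_k -> R) (v : 'I_k -> vec p) m :
  (\sum_i t i *: v i) 0 m = \sum_i t i * v i 0 m.
Proof. by rewrite summxE; apply: eq_bigr => i _; rewrite mxE. Qed.

Lemma e_coord p (l m : 'I_p.+1) : std_basis l 0 m = (l == m)%:R.
Proof. by rewrite /std_basis mxE eqxx /= eq_sym. Qed.

Lemma sum_delta n (t : 'I_n -> R) l : \sum_i t i * (i == l)%:R = t l.
Proof.
rewrite (bigD1 l) //= eqxx mulr1 big1 ?addr0 // => i /negbTE ->; by rewrite mulr0.
Qed.

Lemma sum_delta' n (t : 'I_n -> R) l : \sum_i t i * (l == i)%:R = t l.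
Proof. by rewrite -(sum_delta t l); apply: eq_bigr => i _; rewrite eq_sym. Qed.

Lemma DeltaE p (x : vec p.+1) :
  Delta p x <-> (forall l, 0 <= x 0 l) /\ \sum_l x 0 l = 1.
Proof.
split.
  case=> t [t0 [t1 ->]].
  have E l : (\sum_i t i *: std_basis i) 0 l = t l.
    by rewrite sum_coord; under eq_bigr do rewrite e_coord; rewrite sum_delta.
  by split => [l|]; rewrite ?E //; under eq_bigr do rewrite E.
case=> x0 x1; exists (fun l => x 0 l); split => //; split => //.
apply/rowP => m; rewrite sum_coord; under eq_bigr do rewrite e_coord.
by rewrite sum_delta.
Qed.

Lemma e_Delta p (l : 'I_p.+1) : Delta p (std_basis l).
Proof.
apply/DeltaE; split => [m|]; first by rewrite e_coord ler0n.
by rewrite -(sum_delta' (fun=> 1) l); apply: eq_bigr => i _; rewrite e_coord mul1r.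
Qed.

Lemma hull_sub_Delta p k (v : 'I_k -> vec p.+1) :
  (forall l, Delta p (v l)) -> hull v `<=` Delta p.
Proof.
move=> hv x [t [t0 [t1 ->]]]; apply/DeltaE; split => [m|].
  rewrite sum_coord; apply: sumr_ge0 => i _; apply: mulr_ge0 => //.
  by have [h _] := (DeltaE _).1 (hv i); exact: h.
under eq_bigr do rewrite sum_coord.
rewrite exchange_big /= -t1; apply: eq_bigr => i _.
rewrite -mulr_sumr; have [_ ->] := (DeltaE _).1 (hv i); by rewrite mulr1.
Qed.

Definition zset p (Z : pred 'I_p.+1) : set (vec p.+1) :=
  [set x | Delta p x /\ forall l, Z l -> x 0 l = 0].

Lemma zset_hull p (Z : pred 'I_p.+1) s : ~~ Z s ->
  zset Z = hull (fun l => if Z l then std_basis s else std_basis l).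
Proof.
move=> Zs; apply/seteqP; split.
  move=> x [/DeltaE [x0 x1] xZ].
  exists (fun l => if Z l then 0 else x 0 l); split; first by move=> l; case: ifP.
  split.
    rewrite -x1; apply: eq_bigr => l _; case: ifP => // /xZ ->//.
  apply/rowP => m; rewrite sum_coord.
  rewrite -(sum_delta (fun l => x 0 l) m); apply: eq_bigr => l _.
  case: ifP => [/xZ ->|_]; first by rewrite !mul0r.
  by rewrite e_coord.
move=> x hx; split.
  apply: (hull_sub_Delta _ hx) => l; case: ifP => _; exact: e_Delta.
move=> m Zm; case: hx => t [_ [_ ->]]; rewrite sum_coord big1 // => l _.
case: ifP => Zl; rewrite e_coord.
  have -> : (s == m) = false by apply/negbTE; apply: contraNneq Zs => ->.
  by rewrite mulr0.
have -> : (l == m) = false by apply/negbTE; apply: contraFneq Zl => ->.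
by rewrite mulr0.
Qed.

Lemma polytope_poly n (C : set (vec n)) : polytope C -> polyhedron C.
Proof.
move=> hC a Ca; exists 1%N, (fun=> C); split; first by move=> j.
split; first by move=> j.
exists setT; split; first exact: openT.
by split => // x [_ Cx]; exists ord0.
Qed.

Lemma hull_convex n k (v : 'I_k -> vec n) x y (t : R) :
  hull v x -> hull v y -> 0 <= t <= 1 -> hull v (t *: x + (1 - t) *: y).
Proof.
move=> [a [a0 [a1 ->]]] [b [b0 [b1 ->]]] /andP[t0 t1].
exists (fun i => t * a i + (1 - t) * b i); split.
  by move=> i; apply: addr_ge0; apply: mulr_ge0 => //; rewrite subr_ge0.
split; first by rewrite big_split /= -!mulr_sumr a1 b1 !mulr1 addrC subrK.
rewrite !scaler_sumr -big_split /=; apply: eq_bigr => i _.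
by rewrite [RHS]scalerDl !scalerA.
Qed.

Lemma PL_ext n m (P : set (vec n)) (Q : set (vec m)) f g :
  (forall x, P x -> f x = g x) -> PL_map P Q f -> PL_map P Q g.
Proof.
move=> fg [fQ hf]; split => [x Px|a Pa]; first by rewrite -fg //; exact: fQ.
have [k [C [hC [CP [Ca hN]]]]] := hf a Pa.
exists k, C; split => //; split => //; split => // j x y t Cx Cy ht.
have [l [v Cv]] := hC j.
have cvx : C j (t *: x + (1 - t) *: y).
  by rewrite Cv; apply: hull_convex => //; rewrite -Cv.
rewrite -(fg x (CP j x Cx)) -(fg y (CP j y Cy)) -(fg _ (CP j _ cvx)).
exact: (Ca j x y t Cx Cy ht).
Qed.

Lemma lin_PL n m (P : set (vec n)) (Q : set (vec m)) (M : 'M[R]_(n, m)) :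
  polyhedron P -> (forall x, P x -> Q (x *m M)) -> PL_map P Q (fun x => x *m M).
Proof.
move=> hP PQ; split => // a Pa.
have [k [C [hC [CP hN]]]] := hP a Pa.
exists k, C; split => //; split => //; split => // j x y t _ _ _.
by rewrite mulmxDl -!scalemxAl.
Qed.

Definition proj p (a : 'I_p.+2) (x : vec p.+2) : vec p.+1 := x *m (ind_mx (lift a))^T.

Lemma proj_coord p (a : 'I_p.+2) x m : proj a x 0 m = x 0 (lift a m).
Proof.
rewrite /proj mxE; under eq_bigr do rewrite !mxE.
exact: sum_delta'.
Qed.

Lemma ind_coord p q (th : 'I_p.+1 -> 'I_q.+1) z l :
  ind th z 0 l = \sum_i z 0 i * (th i == l)%:R.
Proof. by rewrite /ind mxE; under eq_bigr do rewrite !mxE. Qed.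

Lemma ind_lift_coord p (a : 'I_p.+2) z j : ind (lift a) z 0 (lift a j) = z 0 j.
Proof.
rewrite ind_coord; under eq_bigr do rewrite (inj_eq (@lift_inj _ a)).
exact: sum_delta.
Qed.

Lemma ind_lift_a p (a : 'I_p.+2) z : ind (lift a) z 0 a = 0.
Proof.
rewrite ind_coord big1 // => i _.
by rewrite eq_sym (negbTE (neq_lift a i)) mulr0.
Qed.

Lemma projK p (a : 'I_p.+2) z : proj a (ind (lift a) z) = z.
Proof. by apply/rowP => m; rewrite proj_coord ind_lift_coord. Qed.

Lemma indK p (a : 'I_p.+2) (x : vec p.+2) : x 0 a = 0 -> ind (lift a) (proj a x) = x.
Proof.
move=> xa; apply/rowP => l; case: (unliftP a l) => [j ->|->].
  by rewrite ind_lift_coord proj_coord.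
by rewrite ind_lift_a xa.
Qed.

Definition Qf p (a : 'I_p.+2) : set (vec p.+2) := zset (pred1 a).

Lemma Qf_polytope p (a : 'I_p.+2) : polytope (Qf a).
Proof.
rewrite /Qf (@zset_hull _ _ (lift a ord0)); first by do 2 eexists.
by rewrite /= eq_sym neq_lift.
Qed.

Lemma Qf_poly p (a : 'I_p.+2) : polyhedron (Qf a).
Proof. exact/polytope_poly/Qf_polytope. Qed.

Lemma Qf_Delta p (a : 'I_p.+2) (x : vec p.+2) : Qf a x -> Delta p.+1 x.
Proof. by case. Qed.

Lemma Qf_a p (a : 'I_p.+2) (x : vec p.+2) : Qf a x -> x 0 a = 0.
Proof. by case=> _ h; apply: h; rewrite /= eqxx. Qed.

Lemma proj_Delta p (a : 'I_p.+2) (x : vec p.+2) : Qf a x -> Delta p (proj a x).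
Proof.
move=> hx; have xa := Qf_a hx; case: hx => [/DeltaE [x0 x1] _]; apply/DeltaE; split => [m|].
  by rewrite proj_coord.
move: x1; rewrite (bigD1_ord a) //= xa add0r => <-.
by apply: eq_bigr => m _; rewrite proj_coord.
Qed.

Lemma ind_Qf p (a : 'I_p.+2) z : Delta p z -> Qf a (ind (lift a) z).
Proof.
move=> hz; split; first exact: (ind_PL (lift a)).1.
by move=> l /eqP ->; rewrite ind_lift_a.
Qed.

Lemma bump_comm (a b m : nat) : (a < b)%N -> bump a (bump b.-1 m) = bump b (bump a m).
Proof.
rewrite /bump => ab.
case: (leqP b.-1 m) => h1; case: (leqP a m) => h2 /=; case: leqP; case: leqP; lia.
Qed.

Section Compat.
Variables (F : quasiPL) (m : nat) (k : 'I_m.+3) (y : 'I_m.+3 -> sec F (DeltaPL m.+1)).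
Hypothesis hy : @horn_compat (underlying F) m.+1 y k.

Lemma lift_inord_pred (a b : 'I_m.+3) : (a < b)%N -> lift a (inord b.-1 : 'I_m.+2) = b.
Proof.
move=> ab; apply: val_inj => /=; rewrite inordK; last first.
  by case: b ab => [[|b]] //= hb _; rewrite -ltnS.
rewrite /bump; have -> : (a <= b.-1)%N by case: (val b) ab.
by case: (val b) ab.
Qed.

Lemma lift_inord_lt (a b : 'I_m.+3) : (a < b)%N -> lift b (inord a : 'I_m.+2) = a.
Proof.
move=> ab; apply: val_inj => /=; rewrite inordK; last first.
  by apply: leq_trans ab _; rewrite -ltnS.
by rewrite /bump leqNgt ab.
Qed.

Lemma compat (S : set (vec m.+3)) (hS : polyhedron S) (a b : 'I_m.+3) :
  (a < b)%N -> a != k -> b != k -> (forall x, S x -> Qf a x /\ Qf b x) ->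
  forall h1 h2, res F (mkPL hS) (DeltaPL m.+1) (proj a) h1 (y a) =
                res F (mkPL hS) (DeltaPL m.+1) (proj b) h2 (y b).
Proof.
move=> ab ak bk SQ h1 h2.
have E := hy ab ak bk.
pose b' : 'I_m.+2 := inord b.-1.
pose a' : 'I_m.+2 := inord a.
pose pi := fun x : vec m.+3 => proj b' (proj a x).
have Qb' x : S x -> Qf b' (proj a x).
  move=> Sx; have [Qa Qb] := SQ x Sx; split; first exact: proj_Delta.
  by move=> l /eqP ->; rewrite proj_coord lift_inord_pred // (Qf_a Qb).
have hpi : PL_map (carrier (mkPL hS)) (carrier (DeltaPL m)) pi.
  apply: (@PL_ext _ _ _ _ (fun x => x *m ((ind_mx (lift a))^T *m (ind_mx (lift b'))^T))).
    by move=> x _; rewrite /pi /proj mulmxA.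
  apply: lin_PL => // x Sx; rewrite mulmxA; exact/proj_Delta/Qb'.
have I1 x : S x -> proj a x = ind (lift b') (pi x).
  by move=> Sx; rewrite indK //; exact: (Qf_a (Qb' x Sx)).
have I2 x : S x -> proj b x = ind (lift a') (pi x).
  move=> Sx; have [Qa Qb] := SQ x Sx.
  apply/rowP => l; case: (unliftP a' l) => [j ->|->].
    rewrite ind_lift_coord !proj_coord; congr (x 0 _); apply: val_inj => /=.
    have hb := ltn_ord b.
    rewrite (@inordK _ a); last by lia.
    rewrite (@inordK _ b.-1); last by lia.
    by rewrite bump_comm.
  by rewrite ind_lift_a proj_coord lift_inord_lt // (Qf_a Qa).
have hc1 : PL_map (carrier (mkPL hS)) (carrier (DeltaPL m.+1)) (ind (lift b') \o pi).
  by apply: PL_ext h1 => x Sx; rewrite I1.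
have hc2 : PL_map (carrier (mkPL hS)) (carrier (DeltaPL m.+1)) (ind (lift a') \o pi).
  by apply: PL_ext h2 => x Sx; rewrite I2.
rewrite (res_ext F _ _ _ _ h1 hc1 _ I1) (res_ext F _ _ _ _ h2 hc2 _ I2).
rewrite !(res_comp F (mkPL hS) (DeltaPL m) (DeltaPL m.+1) pi _ hpi (ind_PL _)).
by congr (res F _ _ _ _ _); symmetry; exact: E.
Qed.
End Compat.

Lemma sum_ind3 N (a b c : R) (j k : 'I_N) :
  \sum_(l < N) (a * (l == j)%:R + b * (l == k)%:R + c) = a + b + c *+ N.
Proof.
rewrite !big_split /= sumr_const card_ord.
by rewrite (sum_delta (fun=> a)) (sum_delta (fun=> b)).
Qed.

Section Retract.
Variables (n : nat) (k : 'I_n.+2).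
Implicit Types x y : vec n.+2.

Definition j0 : 'I_n.+2 := lift k ord0.
Definition jm (x : vec n.+2) : 'I_n.+2 :=
  Order.arg_min j0 (fun l => l != k) (fun l => x 0 l).
Definition mn (x : vec n.+2) := x 0 (jm x).
Definition w : vec n.+2 := \row_l (if l == k then n.+1%:R else -1).
Definition r (x : vec n.+2) : vec n.+2 := x + mn x *: w.

Lemma jm_spec x : jm x != k /\ forall l, l != k -> mn x <= x 0 l.
Proof.
rewrite /mn /jm; case: arg_minP; first by rewrite /j0 eq_sym neq_lift.
by move=> i Pi Hi; split.
Qed.

Lemma r_coord x l : r x 0 l = x 0 l + mn x * (if l == k then n.+1%:R else -1).
Proof. by rewrite /r !mxE. Qed.

Lemma mn_ge0 x : Delta n.+1 x -> 0 <= mn x.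
Proof. by move=> /DeltaE [x0 _]; exact: x0. Qed.

Lemma mn_eq x (j : 'I_n.+2) : j != k -> (forall l, l != k -> x 0 j <= x 0 l) -> mn x = x 0 j.
Proof.
move=> jk hj; have [jmk hm] := jm_spec x.
by apply/le_anti; rewrite hm //= hj.
Qed.

Definition Lam : set (vec n.+2) := [set x | exists i : 'I_n.+1, Qf (lift k i) x].

Lemma Lam_poly : polyhedron Lam.
Proof.
move=> a _; exists n.+1, (fun i => Qf (lift k i)); split; first by move=> i; exact: Qf_polytope.
split; first by move=> i x Qx; exists i.
exists setT; split; first exact: openT.
by split => // x [_ [i Qx]]; exists i.
Qed.

Lemma Lam_Delta x : Lam x -> Delta n.+1 x.
Proof. by case=> i [? _]. Qed.

Lemma sum_w : \sum_l (if l == k then n.+1%:R else -1 : R) = 0.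
Proof.
rewrite (bigD1_ord k) //= eqxx.
rewrite (eq_bigr (fun=> -1)); last by move=> i _; rewrite eq_sym (negbTE (neq_lift k i)).
by rewrite sumr_const card_ord mulNrn subrr.
Qed.

Lemma r_Lam x : Delta n.+1 x -> Lam (r x).
Proof.
move=> hx; have [jmk hm] := jm_spec x; have m0 := mn_ge0 hx.
have /DeltaE [x0 x1] := hx.
have Dr : Delta n.+1 (r x).
  apply/DeltaE; split => [l|].
    rewrite r_coord; case: eqP => [_|/eqP lk].
      by apply: addr_ge0 => //; apply: mulr_ge0.
    by rewrite mulrN1 subr_ge0; exact: hm.
  under eq_bigr do rewrite r_coord.
  by rewrite big_split /= x1 -mulr_sumr sum_w mulr0 addr0.
case: (unliftP k (jm x)) => [i ei|ek]; last by rewrite ek eqxx in jmk.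
exists i; split => // l /eqP ->.
by rewrite r_coord -ei (negbTE jmk) mulrN1 /mn subrr.
Qed.

Lemma r_fix x : Lam x -> r x = x.
Proof.
move=> hx; have m0 := mn_ge0 (Lam_Delta hx).
case: hx => i Qx; have [jmk hm] := jm_spec x.
have : mn x <= x 0 (lift k i) by apply: hm; rewrite eq_sym neq_lift.
rewrite (Qf_a Qx) => m1.
rewrite /r; have -> : mn x = 0 by apply/le_anti; rewrite m1 m0.
by rewrite scale0r addr0.
Qed.

Definition Cp (i : 'I_n.+1) : set (vec n.+2) :=
  [set x | Delta n.+1 x /\ forall l, l != k -> x 0 (lift k i) <= x 0 l].

Definition cbar : vec n.+2 := \row_l (if l == k then 0 else n.+1%:R^-1).

Lemma cbar_Delta : Delta n.+1 cbar.
Proof.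
apply/DeltaE; split => [l|]; first by rewrite mxE; case: ifP => // _; rewrite invr_ge0 ler0n.
under eq_bigr do rewrite mxE.
rewrite (bigD1_ord k) //= eqxx add0r.
rewrite (eq_bigr (fun=> n.+1%:R^-1)); last by move=> i _; rewrite eq_sym (negbTE (neq_lift k i)).
by rewrite sumr_const card_ord -[in RHS](@mulVf _ n.+1%:R) ?pnatr_eq0 // mulr_natr.
Qed.

Lemma Cp_coord (j : 'I_n.+2) (t : 'I_n.+2 -> R) m :
  (\sum_l t l *: (if l == j then cbar else std_basis l)) 0 m =
  t j * cbar 0 m + (if m == j then 0 else t m).
Proof.
rewrite sum_coord (bigD1 j) //= eqxx; congr (_ + _).
case: eqP => [->|/eqP mj].
  by apply: big1 => l /negbTE lj; rewrite lj e_coord lj mulr0.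
rewrite (bigD1 m) //= (negbTE mj) e_coord eqxx mulr1 big1 ?addr0 //.
move=> l /andP [/negbTE lj /negbTE lm]; by rewrite lj e_coord lm mulr0.
Qed.

Lemma Cp_hull (i : 'I_n.+1) :
  Cp i = hull (fun l => if l == lift k i then cbar else std_basis l).
Proof.
set j := lift k i.
have jk : j != k by rewrite eq_sym neq_lift.
have n0 : n.+1%:R != 0 :> R by rewrite pnatr_eq0.
apply/seteqP; split.
  move=> x [/DeltaE [x0 x1] hj].
  pose t l := x 0 l + ((x 0 j *+ n.+1) * (l == j)%:R + x 0 j * (l == k)%:R + (- x 0 j)).
  have tE l : t l = if l == j then x 0 j *+ n.+1 else if l == k then x 0 k else x 0 l - x 0 j.
    rewrite /t; case: (l =P j) => [->|/eqP lj]; first by rewrite (negbTE jk) mulr1 mulr0; ring.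
    case: (l =P k) => [->|/eqP lk]; first by rewrite mulr0 mulr1; ring.
    by rewrite !mulr0; ring.
  exists t; split.
    move=> l; rewrite tE; case: ifP => _; first by rewrite mulrn_wge0.
    case: ifP => [_|/negbT lk]; first exact: x0.
    by rewrite subr_ge0 hj.
  split.
    rewrite /t big_split /= x1 sum_ind3 mulNrn mulrSr; ring.
  apply/rowP => m; rewrite Cp_coord mxE !tE eqxx.
  case: (m =P j) => [->|/eqP mj]; first by rewrite (negbTE jk) addr0 -[x 0 j *+ _]mulr_natr mulfK.
  case: (m =P k) => [->|/eqP mk]; first by rewrite mulr0 add0r.
  by rewrite -[x 0 j *+ _]mulr_natr mulfK //; ring.
move=> x hx; split.
  apply: (hull_sub_Delta _ hx) => l; case: ifP => _; [exact: cbar_Delta|exact: e_Delta].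
case: hx => t [t0 [_ ->]] l lk.
rewrite !Cp_coord eqxx addr0 !mxE (negbTE jk) (negbTE lk).
by case: ifP => _; rewrite ?addr0 // lerDl.
Qed.

Lemma r_affine (i : 'I_n.+1) : affine_on (Cp i) r.
Proof.
set j := lift k i.
have jk : j != k by rewrite eq_sym neq_lift.
move=> x y t [_ hx] [_ hy] /andP [t0 t1].
have t1' : 0 <= 1 - t by rewrite subr_ge0.
rewrite /r (mn_eq jk hx) (mn_eq jk hy) (@mn_eq _ j jk).
  by apply/rowP => l; rewrite !mxE; ring.
move=> l lk; rewrite !mxE.
by apply: lerD; apply: ler_wpM2l => //; [exact: hx|exact: hy].
Qed.

Lemma r_PL : PL_map (Delta n.+1) Lam r.
Proof.
split; first exact: r_Lam.
move=> a _; exists n.+1, Cp; split; first by move=> i; rewrite Cp_hull; do 2 eexists.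
split; first by move=> i x [].
split; first exact: r_affine.
exists setT; split; first exact: openT.
split => // x [_ Dx]; have [jmk hm] := jm_spec x.
case: (unliftP k (jm x)) => [i ei|ek]; last by rewrite ek eqxx in jmk.
by exists i; split => // l lk; rewrite -ei; exact: hm.
Qed.

End Retract.

Lemma glue_compat (F : quasiPL) n (k : 'I_n.+2) (y : 'I_n.+2 -> sec F (DeltaPL n))
  (hy : @horn_compat (underlying F) n y k) (S : set (vec n.+2)) (hS : polyhedron S)
  (a b : 'I_n.+2) : a != k -> b != k -> (forall x, S x -> Qf a x /\ Qf b x) ->
  forall h1 h2, res F (mkPL hS) (DeltaPL n) (proj a) h1 (y a) =
                res F (mkPL hS) (DeltaPL n) (proj b) h2 (y b).
Proof.
case: n k y hy S hS a b => [|m] k y hy S hS a b ak bk SQ h1 h2.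
  have ab : a = b.
    apply: val_inj; have := ltn_ord a; have := ltn_ord b; have := ltn_ord k.
    rewrite -!val_eqE in ak bk; move/eqP: ak; move/eqP: bk => /=; lia.
  by subst b; apply: res_ext.
case: (ltngtP a b) => [ab|ba|/val_inj ab].
- exact: (compat hy ab ak bk SQ h1 h2).
- symmetry; apply: (compat hy ba bk ak) => x Sx; by have [] := SQ x Sx.
- by subst b; apply: res_ext.
Qed.

Theorem proposition2p10 (F : quasiPL) : is_Kan (underlying F).
Proof.
move=> n k y hy.
pose Q (i : 'I_n.+1) : set (vec n.+2) := Qf (lift k i).
have hQ i : polyhedron (Q i) by exact: Qf_poly.
have QQ i j : Q i `&` Q j = zset (pred2 (lift k i) (lift k j)).
  apply/seteqP; split.
    move=> x [[Dx hi] [_ hj]]; split => // l /orP [] /eqP ->;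
      [apply: hi | apply: hj]; by rewrite /= eqxx.
  move=> x [Dx h]; split; split => // l /eqP ->; apply: h; by rewrite /= eqxx ?orbT.
have hQQ i j : polyhedron (Q i `&` Q j).
  rewrite QQ (@zset_hull _ _ k); first by apply: polytope_poly; do 2 eexists.
  by rewrite /= !(negbTE (neq_lift _ _)).
pose L := mkPL (@Lam_poly n k).
have sQP i : Q i `<=` carrier L by move=> x Qx; exists i.
have Qcl i : exists V, closed V /\ Q i = V `&` carrier L.
  exists [set x : vec n.+2 | x 0 (lift k i) = 0]; split.
    apply: (@preimage_closed _ _ (fun x : vec n.+2 => x 0 (lift k i)) [set 0]).
      by move=> x _; exact: coord_continuous.
    exact: closed_eq.
  apply/seteqP; split.
    by move=> x Qx; split; [exact: Qf_a Qx | exists i].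
  move=> x [xa [i' [Dx _]]]; split => // l /eqP ->; exact: xa.
have cov x : carrier L x -> exists i, Q i x by case=> i Qx; exists i.
have lf x : carrier L x -> exists V, open V /\ V x /\
    finite_set [set i | exists y, V y /\ Q i y].
  by move=> _; exists setT; split; [exact: openT | split => //; exact: finite_finset].
have [_ glue] := closed_sheaf F L 'I_n.+1 Q hQ hQQ sQP Qcl cov lf.
have hp i : PL_map (carrier (mkPL (hQ i))) (carrier (DeltaPL n)) (proj (lift k i)).
  by apply: lin_PL => [|x Qx]; [exact: hQ | exact: (proj_Delta Qx)].
pose b i := res F (mkPL (hQ i)) (DeltaPL n) (proj (lift k i)) (hp i) (y (lift k i)).
have hpij i j a : (forall x, (Q i `&` Q j) x -> Qf a x) ->
    PL_map (carrier (mkPL (hQQ i j))) (carrier (DeltaPL n)) (proj a \o id).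
  by move=> h; apply: lin_PL => [|x Qx]; [exact: hQQ | exact: (proj_Delta (h x Qx))].
have [s hs] : exists s, forall i, res F (mkPL (hQ i)) L id (incl_PL (hQ i) (sQP i)) s = b i.
  apply: glue => i j; rewrite /b.
  rewrite -(res_comp F (mkPL (hQQ i j)) (mkPL (hQ i)) (DeltaPL n) id (proj (lift k i)) _ _
             (hpij i j _ (fun x h => h.1))).
  rewrite -(res_comp F (mkPL (hQQ i j)) (mkPL (hQ j)) (DeltaPL n) id (proj (lift k j)) _ _
             (hpij i j _ (fun x h => h.2))).
  apply: (glue_compat hy); rewrite ?(eq_sym _ k) ?neq_lift //.
exists (res F (DeltaPL n.+1) L (r k) (@r_PL n k) s).
move=> i ik; case: (unliftP k i) => [i0 ei|ek]; last by rewrite ek eqxx in ik.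
subst i; rewrite /face /=.
set a := lift k i0.
have hdL : PL_map (carrier (DeltaPL n)) (carrier L) (ind (lift a)).
  by apply: lin_PL => [|z hz]; [exact: Delta_poly | exists i0; exact: ind_Qf].
have hdQ : PL_map (carrier (DeltaPL n)) (carrier (mkPL (hQ i0))) (ind (lift a)).
  by apply: lin_PL => [|z hz]; [exact: Delta_poly | exact: ind_Qf].
have fixd z : carrier (DeltaPL n) z -> ind (lift a) z = (r k \o ind (lift a)) z.
  by move=> hz; rewrite /= r_fix //; exists i0; exact: ind_Qf.
have hrd : PL_map (carrier (DeltaPL n)) (carrier L) (r k \o ind (lift a)).
  exact: PL_ext fixd hdL.
rewrite -(res_comp F (DeltaPL n) (DeltaPL n.+1) L (ind (lift a)) (r k) _ _ hrd).
have hdL' : PL_map (carrier (DeltaPL n)) (carrier L) (id \o ind (lift a)) := hdL.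
rewrite (res_ext F (DeltaPL n) L _ (id \o ind (lift a)) hrd hdL' s (fun z hz => esym (fixd z hz))).
rewrite (res_comp F (DeltaPL n) (mkPL (hQ i0)) L (ind (lift a)) id hdQ
          (incl_PL (hQ i0) (sQP i0)) hdL' s).
rewrite hs /b.
have hid : PL_map (carrier (DeltaPL n)) (carrier (DeltaPL n)) id.
  exact: (incl_PL (@Delta_poly n) (fun x (h : Delta n x) => h)).
have hpd : PL_map (carrier (DeltaPL n)) (carrier (DeltaPL n)) (proj a \o ind (lift a)).
  by apply: PL_ext hid => z _; rewrite /= projK.
rewrite -(res_comp F (DeltaPL n) (mkPL (hQ i0)) (DeltaPL n) (ind (lift a)) (proj a) hdQ
          (hp i0) hpd).
rewrite (res_ext F (DeltaPL n) (DeltaPL n) _ id hpd hid _ (fun z _ => projK _ _)).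
exact: res_id.
Qed.
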